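(* Let $\mathcal{D}_n=(Q,\Sigma,\delta,0,F)$ with $Q=\{0,\dots,n-1\}$ be a minimal complete DFA accepting a suffix-free language $L$, with empty state $n-1$, and let $T$ be its transition semigroup. Then every semiconstant transformation $(S\to q)$ belonging to $T$ satisfies $0\in S$ and $q=n-1$. Moreover, if $T$ is maximal (i.e. no minimal complete DFA with state set $Q$, initial state $0$ and empty state $n-1$ accepting a suffix-free language has a transition semigroup properly containing $T$), then every semiconstant transformation $(S\to n-1)$ with $0\in S$ belongs to $T$.
   Context: A language $L$ is suffix-free if whenever $w\in L$ and $u\in L$ with $u$ a suffix of $w$, then $u=w$. Transformations act on the right. The transition semigroup of a DFA is the semigroup of transformations of its state set generated by the transformations induced by its letters. A minimal complete DFA of a suffix-free language with $n\ge2$ states has exactly one empty state (a state from which no final state is reachable), labeled $n-1$. A transformation $t$ of $Q$ is semiconstant, written $(S\to q)$, if for some nonempty $S\subseteq Q$ and $q\in Q$ it maps every state of $S$ to $q$ and fixes every state of $Q\setminus S$. *)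

(* Defs.v *)
From mathcomp Require Import all_boot.
Set Implicit Arguments. Unset Strict Implicit. Unset Printing Implicit Defensive.

Section DFA.
Variables (n : nat) (Sigma : finType).

(* A complete DFA over the states Q = 'I_n: delta a q is the image of q under
   letter a.  Transformations act on the right: q.(a1 a2 ... ak) =
   delta ak (... (delta a1 q)). *)
Definition run (delta : Sigma -> 'I_n -> 'I_n) (q : 'I_n) (w : seq Sigma) : 'I_n :=
  foldl (fun p a => delta a p) q w.

Definition lang (delta : Sigma -> 'I_n -> 'I_n) (i0 : 'I_n) (F : {set 'I_n})
  (w : seq Sigma) : Prop := run delta i0 w \in F.

(* suffix u w (seq.v): u is a suffix of w. *)
Definition suffix_free (L : seq Sigma -> Prop) : Prop :=
  forall w u, L w -> L u -> suffix u w -> u = w.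

Definition minimal_dfa (delta : Sigma -> 'I_n -> 'I_n) (i0 : 'I_n) (F : {set 'I_n}) :=
  (forall q, exists w, run delta i0 w = q) /\
  (forall p q : 'I_n, p != q ->
     exists w, (run delta p w \in F) != (run delta q w \in F)).

Definition empty_state (delta : Sigma -> 'I_n -> 'I_n) (F : {set 'I_n}) (q : 'I_n) :=
  forall w, run delta q w \notin F.

Definition sf_min_dfa (delta : Sigma -> 'I_n -> 'I_n) (i0 : 'I_n) (F : {set 'I_n}) :=
  [/\ nat_of_ord i0 = 0,
      minimal_dfa delta i0 F,
      suffix_free (lang delta i0 F) &
      exists e : 'I_n, nat_of_ord e = n.-1 /\ empty_state delta F e].

Definition in_tsg (delta : Sigma -> 'I_n -> 'I_n) (t : {ffun 'I_n -> 'I_n}) : Prop :=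
  exists w : seq Sigma, w != [::] /\ t = [ffun q => run delta q w].

End DFA.

Definition semiconst (n : nat) (S : {set 'I_n}) (q : 'I_n) : {ffun 'I_n -> 'I_n} :=
  [ffun x => if x \in S then q else x].

Definition maximal_tsg (n : nat) (T : {ffun 'I_n -> 'I_n} -> Prop) : Prop :=
  forall (Sigma' : finType) (delta' : Sigma' -> 'I_n -> 'I_n) (i0' : 'I_n)
         (F' : {set 'I_n}),
    sf_min_dfa delta' i0' F' ->
    ~ ((forall t, T t -> in_tsg delta' t) /\
       (exists t, in_tsg delta' t /\ ~ T t)).

(* Main.v *)
Require Import Defs.
From mathcomp Require Import all_boot.
From Stdlib Require Import Classical.
From mathcomp Require Import zify.

Set Implicit Arguments. Unset Strict Implicit. Unset Printing Implicit Defensive.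

Section Aux.
Variables (n : nat) (Sigma : finType) (delta : Sigma -> 'I_n -> 'I_n).

Lemma run_cat q x y : run delta q (x ++ y) = run delta (run delta q x) y.
Proof. by rewrite /run foldl_cat. Qed.

Lemma run_rcons q x a : run delta q (rcons x a) = delta a (run delta q x).
Proof. by rewrite /run foldl_rcons. Qed.

Lemma no_into (i0 : 'I_n) : (forall a q, delta a q != i0) ->
  forall w q, w != [::] -> run delta q w != i0.
Proof.
move=> H w q; case/lastP: w => [//|w a _]; by rewrite run_rcons.
Qed.

Lemma fix_all (e : 'I_n) : (forall a, delta a e = e) -> forall w, run delta e w = e.
Proof. move=> H; elim=> [//|a w IH]; by rewrite /= H. Qed.

Variables (i0 : 'I_n) (F : {set 'I_n}).
Hypothesis (hn : 2 <= n) (Hsf : sf_min_dfa delta i0 F).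

Lemma sf_e : exists e : 'I_n, nat_of_ord e = n.-1 /\ empty_state delta F e.
Proof. by case: Hsf. Qed.

Lemma e_ne0 (e : 'I_n) : nat_of_ord e = n.-1 -> e != i0.
Proof.
case: Hsf => h0 _ _ _ he; apply/eqP => E; move: he; rewrite E h0.
by case: n hn => [|[|m]].
Qed.

Lemma e_fix (e : 'I_n) : empty_state delta F e -> forall a, delta a e = e.
Proof.
case: Hsf => _ [_ Hd] _ _ He a; apply/eqP; apply/negPn/negP => ne.
have [v Hv] := Hd _ _ ne.
have H1 := He (a :: v); have H2 := He v.
move: Hv H1; rewrite (negbTE H2) /run /=; by case: (_ \in F).
Qed.

Lemma accept_from (e : 'I_n) (q : 'I_n) : empty_state delta F e -> q != e ->
  exists v, run delta q v \in F.
Proof.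
case: Hsf => _ [_ Hd] _ _ He ne.
have [v Hv] := Hd _ _ ne; exists v; move: Hv; by rewrite (negbTE (He v)); case: (_ \in F).
Qed.

Lemma no_into0 : forall a q, delta a q != i0.
Proof.
case: Hsf => h0 [Hr _] Hs [e [he He]] a q; apply/eqP => E.
have [v Hv] : exists v, run delta i0 v \in F.
  by apply: (accept_from He); rewrite eq_sym e_ne0.
have [u Hu] := Hr q.
have L1 : lang delta i0 F v by [].
have L2 : lang delta i0 F ((u ++ [:: a]) ++ v).
  by rewrite /lang !run_cat Hu /run /= E.
have := Hs _ _ L2 L1 (suffix_suffix _ _) => /(f_equal size).
rewrite !size_cat /=; lia.
Qed.

Lemma part1 S q : S != set0 -> in_tsg delta (semiconst S q) ->
  (exists2 s, s \in S & nat_of_ord s = 0) /\ nat_of_ord q = n.-1.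
Proof.
have Hno0 := no_into0.
case: Hsf => h0 [Hr Hd] Hs [e [he He]] _ [w [wne Ew]].
have Hw x : run delta x w = if x \in S then q else x.
  by have := congr1 (fun f : {ffun 'I_n -> 'I_n} => f x) Ew; rewrite !ffunE.
have Hno x : run delta x w != i0 by apply: no_into.
have i0S : i0 \in S.
  apply/negPn/negP => nS; have := Hno i0; by rewrite Hw (negbTE nS) eqxx.
split; first by exists i0.
have Hq : run delta i0 w = q by rewrite Hw i0S.
have Hqq : run delta q w = q by rewrite Hw; case: ifP.
case: (eqVneq q e) => [->//|ne].
have [v Hv] := accept_from He ne.
have [u Hu] := Hr q.
have L1 : lang delta i0 F (w ++ v) by rewrite /lang run_cat Hq.
have L2 : lang delta i0 F (u ++ (w ++ v)) by rewrite /lang !run_cat Hu Hqq.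
have := Hs _ _ L2 L1 (suffix_suffix _ _).
case: u Hu L2 => [|b u] Hu _ E.
- have := Hno i0; by rewrite Hq -Hu eqxx.
- move/(f_equal size): E; rewrite !size_cat /=; lia.
Qed.

End Aux.

Definition delta' (n : nat) (Sigma : finType) (delta : Sigma -> 'I_n -> 'I_n)
  (S : {set 'I_n}) (e : 'I_n) (a : option Sigma) (p : 'I_n) : 'I_n :=
  match a with Some a => delta a p | None => if p \in S then e else p end.

Lemma run_map n (Sigma : finType) (delta : Sigma -> 'I_n -> 'I_n) S e w q :
  run (delta' delta S e) q (map Some w) = run delta q w.
Proof. by elim: w q => [//|a w IH] q /=; apply: IH. Qed.

Lemma run_strip n (Sigma : finType) (delta : Sigma -> 'I_n -> 'I_n) S e :
  (forall a, delta a e = e) ->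
  forall w q, run (delta' delta S e) q w != e ->
    run (delta' delta S e) q w = run delta q (pmap id w).
Proof.
move=> Hf; have He : forall w, run (delta' delta S e) e w = e.
  by apply: fix_all => -[a|] /=; [apply: Hf | case: ifP].
elim=> [//|[a|] w IH] q /=.
- by rewrite /run /= -!/(run _ _ _); apply: IH.
- rewrite /run /= -!/(run _ _ _); case: ifP => _.
  + by rewrite He eqxx.
  + by apply: IH.
Qed.

Theorem lemma5 (n : nat) (hn : 2 <= n) (Sigma : finType)
  (delta : Sigma -> 'I_n -> 'I_n) (i0 : 'I_n) (F : {set 'I_n}) :
  sf_min_dfa delta i0 F ->
  (forall (S : {set 'I_n}) (q : 'I_n), S != set0 ->
     in_tsg delta (semiconst S q) ->
     (exists2 s, s \in S & nat_of_ord s = 0) /\ nat_of_ord q = n.-1) /\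
  (maximal_tsg (in_tsg delta) ->
   forall (S : {set 'I_n}) (q : 'I_n),
     (exists2 s, s \in S & nat_of_ord s = 0) -> nat_of_ord q = n.-1 ->
     in_tsg delta (semiconst S q)).
Proof.
move=> Hsf; split; first by move=> S q; exact: (part1 hn Hsf).
move=> Hmax S q [s sS s0] hq.
have [e [he He]] := sf_e Hsf.
have qe : q = e by apply: ord_inj; rewrite hq he.
subst q.
have Hfix := e_fix Hsf He.
have Hno0 := no_into0 hn Hsf.
have Hne0 := e_ne0 hn Hsf he.
case: (Hsf) => h0 [Hr Hd] Hs _.
have i0S : i0 \in S by have -> : i0 = s by apply: ord_inj; rewrite h0 s0.
set d' := delta' delta S e.
have Hd'e : forall w, run d' e w = e.
  by apply: fix_all => -[a|] /=; [apply: Hfix | case: ifP].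
have Hd'0 : forall a r, d' a r != i0.
  move=> [a|] r; rewrite /d' /delta'; first exact: Hno0.
  case: ifP => rS; [exact: Hne0|].
  apply/eqP => E; by rewrite E i0S in rS.
have eF : e \notin F := He [::].
have ne_e r : r \in F -> r != e by move=> rF; apply/eqP => E; rewrite -E rF in eF.
have key : sf_min_dfa d' i0 F.
  split.
  - by [].
  - split.
    + move=> p; have [w Hw] := Hr p; exists (map Some w); by rewrite run_map.
    + move=> p p' ne; have [w Hw] := Hd p p' ne; exists (map Some w); by rewrite !run_map.
  - move=> w u Lw Lu /suffixP [x Ex]; subst w.
    have Su : run d' i0 u = run delta i0 (pmap id u).
      by apply: run_strip => //; apply: ne_e.
    have Sxu : run d' i0 (x ++ u) = run delta i0 (pmap id (x ++ u)).
      by apply: run_strip => //; apply: ne_e.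
    have Sx : run d' i0 x = run delta i0 (pmap id x).
      apply: run_strip => //; apply/eqP => E; move: Lw; rewrite /lang run_cat E Hd'e.
      by rewrite (negbTE eF).
    have L1 : lang delta i0 F (pmap id u) by rewrite /lang -Su.
    have L2 : lang delta i0 F (pmap id x ++ pmap id u) by rewrite /lang -pmap_cat -Sxu.
    have E := Hs _ _ L2 L1 (suffix_suffix _ _).
    have px0 : pmap id x = [::].
      move/(f_equal size): E; rewrite size_cat; case: (pmap id x) => //= a l; lia.
    case: x Sx px0 {Lw Sxu L2 E} => [//|a x] Sx px0.
    have := no_into Hd'0 i0 (isT : a :: x != [::]).
    by rewrite Sx px0 eqxx.
  - exists e; split => //; move=> w; rewrite Hd'e; exact: eF.
apply: NNPP => Hnot; apply: (Hmax _ _ _ _ key); split.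
- move=> t [w [wne ->]]; exists (map Some w); split; first by case: w wne.
  by apply/ffunP => x; rewrite !ffunE run_map.
- exists (semiconst S e); split => //; exists [:: None]; split => //.
Qed.
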